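(* Let $S^{\max}$, $L$, $\mathcal{C}$ and $\mathcal{O}$ be as in the context. For all $\sigma,\sigma'\in\mathbb{T}$ with $\sigma\preceq\sigma'$, we have $\mathcal{O}(\sigma)\supseteq\mathcal{O}(\sigma')$.
   Context: Let $E$ be a set of events. A trace is a finite sequence $\sigma=\sigma_0\cdots\sigma_{n-1}$ ($n\ge 0$) or an infinite sequence $\sigma_0\sigma_1\cdots$ of events; $|\sigma|$ is its length ($\infty$ if infinite) and $\mathbb{T}$ is the set of all traces (including the empty trace). Write $\sigma\preceq\sigma'$ iff $|\sigma|\le|\sigma'|$ and $\sigma_i=\sigma'_i$ for all $0\le i<|\sigma|$ (prefix order). For a finite trace $\sigma$, $\sigma\sigma'$ denotes concatenation. For $P\subseteq\mathbb{T}$, $\mathrm{pf}(P)=\{\sigma'\in\mathbb{T}\mid\exists\sigma\in P.\ \sigma'\preceq\sigma\}$. Fix $S^{\max}\subseteq\mathbb{T}$ and let $S^{\mathrm{pf}}=\mathrm{pf}(S^{\max})$ (valid traces). For $P\subseteq\mathbb{T}$, $\alpha(P)=\{\sigma\in\mathrm{pf}(P)\mid\forall\sigma'\in S^{\max}.\ \sigma\preceq\sigma'\Rightarrow\sigma'\in P\}$. Let $L\subseteq\wp(S^{\max})$ with $S^{\max},\emptyset\in L$ be such that $(L,\subseteq)$ is a complete lattice with top $S^{\max}$, bottom $\emptyset$, join $\sqcup$ and meet $\sqcap$ (least upper bounds / greatest lower bounds in $L$ w.r.t. $\subseteq$, not necessarily $\cup,\cap$). The inquiry function is $\mathcal{I}(\sigma)=\sqcap\{P\in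 L\mid \sigma\in\alpha(P)\}$ for $\sigma\in S^{\mathrm{pf}}$, and $\mathcal{I}(\sigma)=\emptyset$ for $\sigma\notin S^{\mathrm{pf}}$. A cognizance function is a map $\mathcal{C}:\mathbb{T}\to\wp(\mathbb{T})$ that is extensive ($\sigma\in\mathcal{C}(\sigma)$ for all $\sigma$), satisfies $\mathcal{C}(\sigma\sigma')=\{\tau\tau'\mid\tau\in\mathcal{C}(\sigma),\tau'\in\mathcal{C}(\sigma')\}$ for all $\sigma,\sigma'$, and satisfies $\sigma\notin S^{\mathrm{pf}}\Rightarrow\mathcal{C}(\sigma)\cap S^{\mathrm{pf}}=\emptyset$. The observation function is $\mathcal{O}(\sigma)=\sqcup\{\mathcal{I}(\sigma')\mid\sigma'\in\mathcal{C}(\sigma)\}$. *)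

(* Defs.v *)
From Stdlib Require Import Arith.

(* A trace over events E: a finite or infinite sequence, encoded as a map
   nat -> option E which, once undefined (None), stays undefined.
   The length is the first index where it is None (infinite if never). *)
Definition trace (E : Type) :=
  { f : nat -> option E | forall n, f n = None -> f (S n) = None }.

Definition tr {E : Type} (s : trace E) : nat -> option E := proj1_sig s.

Definition tset (E : Type) := trace E -> Prop.

Definition tsubset {E : Type} (P Q : tset E) : Prop := forall x, P x -> Q x.

Definition tempty {E : Type} : tset E := fun _ => False.

Definition prefix {E : Type} (s s' : trace E) : Prop :=
  forall i e, tr s i = Some e -> tr s' i = Some e.

Definition len_is {E : Type} (s : trace E) (n : nat) : Prop :=
  tr s n = None /\ forall k, k < n -> tr s k <> None.

Definition finite_trace {E : Type} (s : trace E) : Prop := exists n, len_is s n.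

Definition is_concat {E : Type} (s s' r : trace E) : Prop :=
  exists n, len_is s n /\
    forall i, tr r i = (if i <? n then tr s i else tr s' (i - n)).

Definition pf {E : Type} (P : tset E) : tset E :=
  fun s' => exists s, P s /\ prefix s' s.

Definition alpha {E : Type} (Smax : tset E) (P : tset E) : tset E :=
  fun s => pf P s /\ forall s', Smax s' -> prefix s s' -> P s'.

Definition is_lub {E : Type} (L : tset E -> Prop) (X : tset E -> Prop) (U : tset E) : Prop :=
  L U /\ (forall Q, X Q -> tsubset Q U) /\
  (forall V, L V -> (forall Q, X Q -> tsubset Q V) -> tsubset U V).

Definition is_glb {E : Type} (L : tset E -> Prop) (X : tset E -> Prop) (U : tset E) : Prop :=
  L U /\ (forall Q, X Q -> tsubset U Q) /\
  (forall V, L V -> (forall Q, X Q -> tsubset V Q) -> tsubset V U).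

Definition complete_lattice_on {E : Type} (Smax : tset E) (L : tset E -> Prop)
    (join meet : (tset E -> Prop) -> tset E) : Prop :=
  L Smax /\ L tempty /\ (forall P, L P -> tsubset P Smax) /\
  (forall X, (forall P, X P -> L P) -> is_lub L X (join X) /\ is_glb L X (meet X)).

Definition inquiry {E : Type} (Smax : tset E) (L : tset E -> Prop)
    (meet : (tset E -> Prop) -> tset E) (s : trace E) : tset E :=
  fun x => pf Smax s /\ meet (fun P => L P /\ alpha Smax P s) x.

Definition cognizance {E : Type} (Smax : tset E) (C : trace E -> tset E) : Prop :=
  (forall s, C s s) /\
  (forall s s' r, is_concat s s' r ->
     forall x, C r x <-> exists t t', C s t /\ C s' t' /\ is_concat t t' x) /\
  (forall s, ~ pf Smax s -> forall x, C s x -> ~ pf Smax x).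

Definition observation {E : Type} (Smax : tset E) (L : tset E -> Prop)
    (join meet : (tset E -> Prop) -> tset E) (C : trace E -> tset E)
    (s : trace E) : tset E :=
  join (fun P => exists s', C s s' /\ P = inquiry Smax L meet s').

(* Main.v *)
Require Import Defs.
From Stdlib Require Import Arith Lia Classical FunctionalExtensionality PropExtensionality ProofIrrelevance.

Lemma persist {E} (s : trace E) k j : tr s k = None -> k <= j -> tr s j = None.
Proof.
  intros H Hkj. induction Hkj; auto. destruct s as [f pf]; simpl in *. auto.
Qed.

Lemma finite_of {E} (s : trace E) n : tr s n = None -> exists m, len_is s m.
Proof.
  induction n; intros H.
  - exists 0. split; auto. intros; lia.
  - destruct (tr s n) eqn:Hn.
    + exists (S n). split; auto. intros k Hk Hk'.
      assert (k = n \/ k < n) as [->|Hl] by lia; [congruence|].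
      pose proof (persist s k n Hk' ltac:(lia)). congruence.
    + auto.
Qed.

Lemma prefix_trans {E} (a b c : trace E) : prefix a b -> prefix b c -> prefix a c.
Proof. unfold prefix; eauto. Qed.

Lemma concat_prefix {E} (t t' x : trace E) : is_concat t t' x -> prefix t x.
Proof.
  intros [m [[Hm _] Hx]] i e He. rewrite Hx.
  destruct (i <? m) eqn:Hi; auto.
  apply Nat.ltb_ge in Hi. pose proof (persist t m i Hm Hi). congruence.
Qed.

Lemma prefix_decomp {E} (C : trace E -> tset E) :
  (forall s s' r, is_concat s s' r ->
     forall x, C r x <-> exists t t', C s t /\ C s' t' /\ is_concat t t' x) ->
  forall s s', prefix s s' ->
  (forall x, C s' x -> exists t, C s t /\ prefix t x).
Proof.
  intros Ccat s s' Hp.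
  destruct (classic (exists n, tr s n = None)) as [[n Hn]|Hinf].
  - destruct (finite_of s n Hn) as [m Hm].
    assert (Hpers : forall i, (fun i => tr s' (i + m)) i = None -> (fun i => tr s' (i + m)) (S i) = None).
    { intros i H. simpl in *. destruct s' as [f pf]; simpl in *. apply pf; auto. }
    set (s'' := exist _ (fun i => tr s' (i + m)) Hpers : trace E).
    assert (Hc : is_concat s s'' s').
    { exists m. split; auto. intros i. destruct (i <? m) eqn:Hi.
      - apply Nat.ltb_lt in Hi. destruct Hm as [_ Hm].
        destruct (tr s i) eqn:E1; [|exfalso; eapply Hm; eauto].
        apply Hp; auto.
      - apply Nat.ltb_ge in Hi. unfold s'', tr at 2; simpl. f_equal; lia. }
    intros x Hx. apply (Ccat _ _ _ Hc) in Hx. destruct Hx as [t [t' [H1 [_ H3]]]].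
    exists t. split; auto. eapply concat_prefix; eauto.
  - assert (Heq : s = s').
    { assert (tr s = tr s').
      { apply functional_extensionality. intros n.
        destruct (tr s n) eqn:E1.
        - symmetry. apply Hp; auto.
        - exfalso; eauto. }
      destruct s as [f pf], s' as [f' pf']; unfold tr in H; simpl in H. subst.
      f_equal. apply proof_irrelevance. }
    subst. intros x Hx. exists x. split; auto. intros i e; auto.
Qed.

Theorem lemma3 (E : Type) (Smax : tset E) (L : tset E -> Prop)
    (join meet : (tset E -> Prop) -> tset E) (C : trace E -> tset E) :
  complete_lattice_on Smax L join meet ->
  cognizance Smax C ->
  forall s s' : trace E, prefix s s' ->
    tsubset (observation Smax L join meet C s') (observation Smax L join meet C s).
Proof.
  intros [HSm [HLe [HLsub HCL]]] [Cext [Ccat Cpf]] s s' Hp.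
  assert (LI : forall t, L (inquiry Smax L meet t)).
  { intros t. destruct (classic (pf Smax t)) as [H|H].
    - replace (inquiry Smax L meet t) with (meet (fun P => L P /\ alpha Smax P t)).
      + apply (HCL (fun P => L P /\ alpha Smax P t)). intros P [? ?]; auto.
      + apply functional_extensionality; intro y. apply propositional_extensionality.
        unfold inquiry. tauto.
    - replace (inquiry Smax L meet t) with (@tempty E); auto.
      apply functional_extensionality; intro y. apply propositional_extensionality.
      unfold inquiry, tempty. tauto. }
  assert (anti : forall t x, prefix t x -> tsubset (inquiry Smax L meet x) (inquiry Smax L meet t)).
  { intros t x Htx y [Hx Hm]. split.
    - destruct Hx as [m [Hm1 Hm2]]. exists m. split; auto. eapply prefix_trans; eauto.
    - destruct (HCL (fun P => L P /\ alpha Smax P x) ltac:(intros P [? ?]; auto)) as [_ [LmX [Lx _]]].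
      destruct (HCL (fun P => L P /\ alpha Smax P t) ltac:(intros P [? ?]; auto)) as [_ [_ [_ Gt]]].
      apply (Gt (meet (fun P => L P /\ alpha Smax P x))); auto; clear Hm.
      intros Q [LQ [HpfQ HQ]]. apply Lx. split; auto. split.
      + destruct Hx as [m [Hm1 Hm2]]. exists m. split; auto. apply HQ; auto.
        eapply prefix_trans; eauto.
      + intros m Hm1 Hm2. apply HQ; auto. eapply prefix_trans; eauto. }
  pose proof (prefix_decomp C Ccat s s' Hp) as Hdec.
  unfold observation.
  set (X := fun P => exists s0, C s s0 /\ P = inquiry Smax L meet s0).
  set (X' := fun P => exists s0, C s' s0 /\ P = inquiry Smax L meet s0).
  assert (HX : forall P, X P -> L P) by (intros P [t [_ ->]]; auto).
  assert (HX' : forall P, X' P -> L P) by (intros P [t [_ ->]]; auto).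
  destruct (HCL X HX) as [[LJ [UJ _]] _].
  destruct (HCL X' HX') as [[_ [_ MJ']] _].
  apply MJ'; auto.
  intros Q [x [Hx ->]]. destruct (Hdec x Hx) as [t [Ht Htx]].
  intros y Hy. apply (UJ (inquiry Smax L meet t)).
  - exists t; auto.
  - eapply anti; eauto.
Qed.
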